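(* Let $m\ge 2$. Let $H_3$ be the graph with vertices $v_1,\dots,v_7$ whose edges are those of the $7$-cycle $v_1v_2\cdots v_7v_1$ together with $v_2v_5,v_3v_6,v_4v_7$ (it has exactly one vertex of degree $2$, namely $v_1$), and let $H_2$ be the graph with vertices $v_1,\dots,v_6$ and edges $v_1v_2,v_2v_3,v_3v_4,v_4v_5,v_5v_6,v_6v_1,v_2v_5,v_3v_6$ (it has exactly two vertices of degree $2$, namely $v_1,v_4$). Let $G$ be the cubic graph constructed from the path $P_m$ by replacing each leaf with a copy of $H_3$ and each internal vertex with a copy of $H_2$, where each edge $uv$ of $P_m$ is replaced by an edge joining a degree-$2$ vertex of the copy for $u$ to a degree-$2$ vertex of the copy for $v$, each degree-$2$ vertex being used exactly once. Then (a) $G$ is a bridged, Class $2$, triangle-free cubic graph, and (b) $c_2(G)-\left\lceil\frac{|V(G)|+2}{4}\right\rceil=\left\lfloor\frac{m}{2}\right\rfloor-1$.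
   Context: A graph is bridged if it has a bridge. A graph of maximum degree $\Delta$ is Class $1$ if its chromatic index is $\Delta$ and Class $2$ if it is $\Delta+1$. For a graph $G=(V,E)$ and $S_0\subseteq V$, the irreversible $2$-threshold conversion process sets, for $t=1,2,\dots$, $S_t=S_{t-1}\cup\{v: v \text{ has at least } 2 \text{ neighbours in } S_{t-1}\}$; $S_0$ is a $2$-conversion set if $S_t=V$ for some $t$, and $c_2(G)$ is the minimum size of a $2$-conversion set. *)

(* Defs.v *)
From mathcomp Require Import all_boot all_order all_algebra.
Set Implicit Arguments. Unset Strict Implicit. Unset Printing Implicit Defensive.

Section GraphNotions.
Variables (V : finType) (e : rel V).

Definition simple_graph : Prop := symmetric e /\ irreflexive e.

Definition deg (x : V) : nat := #|[set y | e x y]|.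

Definition max_deg : nat := \max_(x : V) deg x.

Definition cubic : Prop := forall x, deg x = 3.

Definition del_edge (x y : V) : rel V :=
  fun a b => e a b && ~~ (((a == x) && (b == y)) || ((a == y) && (b == x))).

Definition is_bridge (x y : V) : Prop :=
  e x y /\ n_comp e [set: V] < n_comp (del_edge x y) [set: V].

Definition bridged : Prop := exists x y, is_bridge x y.

Definition triangle_free : Prop := forall x y z, e x y -> e y z -> e z x -> False.

Definition edge_colouring (k : nat) (col : V -> V -> nat) : Prop :=
  (forall x y, e x y -> col x y = col y x /\ col x y < k) /\
  (forall x y z, e x y -> e x z -> y != z -> col x y != col x z).

Definition edge_colourable (k : nat) : Prop := exists col, edge_colouring k col.

Definition is_chromatic_index (k : nat) : Prop :=
  edge_colourable k /\ forall j, edge_colourable j -> k <= j.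

Definition class2 : Prop := is_chromatic_index max_deg.+1.

Definition conv_step (S : {set V}) : {set V} :=
  S :|: [set v | 2 <= #|[set u in S | e v u]|].

Definition conv_iter (S0 : {set V}) (t : nat) : {set V} := iter t conv_step S0.

Definition two_conversion_set (S0 : {set V}) : Prop :=
  exists t, conv_iter S0 t = [set: V].

Definition is_c2 (k : nat) : Prop :=
  (exists S0, two_conversion_set S0 /\ #|S0| = k) /\
  (forall S0, two_conversion_set S0 -> k <= #|S0|).

End GraphNotions.

Definition ceil_div (a b : nat) : nat := (a + b - 1) %/ b.

(* Vertices 0 .. 6m+1. Copy 0 = H_3 on 0..6; copies 1..m-2 = H_2 on
   7+6(c-1) .. 7+6(c-1)+5; copy m-1 = H_3 on 6m-5 .. 6m+1.
   Local labels: v_i is local index i-1. *)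
Definition upair (a b i j : nat) : bool :=
  ((a == i) && (b == j)) || ((a == j) && (b == i)).

Definition h3adj (a b : nat) : bool :=
  [&& a < 7, b < 7 &
   [|| a.+1 %% 7 == b, b.+1 %% 7 == a, upair a b 1 4, upair a b 2 5 | upair a b 3 6]].

Definition h2adj (a b : nat) : bool :=
  [&& a < 6, b < 6 &
   [|| a.+1 %% 6 == b, b.+1 %% 6 == a, upair a b 1 4 | upair a b 2 5]].

Definition copy_of (m x : nat) : nat :=
  if x < 7 then 0 else if x < 6 * m - 5 then (x - 7) %/ 6 + 1 else m - 1.

Definition local (m x : nat) : nat :=
  if x < 7 then x else if x < 6 * m - 5 then (x - 7) %% 6 else x - (6 * m - 5).

Definition is_H3 (m c : nat) : bool := (c == 0) || (c == m - 1).

Definition ladj (m x y : nat) : bool :=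
  (copy_of m x == copy_of m y) &&
  (if is_H3 m (copy_of m x) then h3adj (local m x) (local m y)
   else h2adj (local m x) (local m y)).

(* the degree-2 vertex of copy c used towards copy c+1
   (v1 for the H_3 copy 0, v4 for an H_2 copy); the one used towards c-1 is v1 *)
Definition rport (c : nat) : nat := if c == 0 then 0 else 3.

Definition conn (m x y : nat) : bool :=
  [&& copy_of m y == (copy_of m x).+1, local m x == rport (copy_of m x)
    & local m y == 0].

Definition gadj (m x y : nat) : bool := [|| ladj m x y, conn m x y | conn m y x].

Definition Gm (m : nat) : rel 'I_(6 * m + 2) := fun x y => gadj m x y.
Arguments Gm : clear implicits.

(* Main.v *)
Require Import Defs.
From mathcomp Require Import all_boot all_order all_algebra.
From mathcomp Require Import zify.
Import GRing.Theory Num.Theory.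
Set Implicit Arguments. Unset Strict Implicit. Unset Printing Implicit Defensive.

Definition base (c : nat) := if c == 0 then 0 else (6 * c).+1.
Definition sz m c := if is_H3 m c then 7 else 6.

Lemma dec_ok m x : 2 <= m -> x < 6 * m+2 ->
  [/\ copy_of m x < m, local m x < sz m (copy_of m x) & x = base (copy_of m x) + local m x].
Proof.
move=> hm hx; rewrite /copy_of /local /sz /is_H3 /base.
have [h1|h1] := ltnP x 7.
  by rewrite /=; split => //; lia.
have [h2|h2] := ltnP x (6 * m-5).
  have -> : ((x - 7) %/ 6 + 1 == 0) = false by lia.
  have -> : ((x - 7) %/ 6 + 1 == m-1) = false by lia.
  split => /=; lia.
have -> : (m - 1 == 0) = false by lia.
rewrite eqxx orbT; split; lia.
Qed.

Lemma enc_ok m c i : 2 <= m -> c < m -> i < sz m c ->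
  copy_of m (base c + i) = c /\ local m (base c + i) = i.
Proof.
move=> hm hc; rewrite /copy_of /local /sz /is_H3 /base.
case: (boolP (c == 0)) => [/eqP->|c0] /=.
  move=> hi; rewrite hi; split => //.
case: (boolP (c == m-1)) => [/eqP->|cm] /= hi.
  have -> : (6 * (m - 1)).+1 + i < 7 = false by lia.
  have -> : (6 * (m - 1)).+1 + i < 6 * m-5 = false by lia.
  split; lia.
have -> : (6 * c).+1 + i < 7 = false by lia.
have -> : (6 * c).+1 + i < 6 * m-5 = true by lia.
split; lia.
Qed.

Lemma int_eq m : 2 <= m ->
  (((2 * m)%:Z - (ceil_div ((6 * m + 2) + 2) 4)%:Z = (m %/ 2)%:Z - 1)%R).
Proof. move=> hm; rewrite /ceil_div. lia. Qed.
Definition hadj (b : bool) i j := if b then h3adj i j else h2adj i j.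
Definition padj m c i c' j :=
  [|| (c == c') && hadj (is_H3 m c) i j,
      [&& c' == c.+1, i == rport c & j == 0] |
      [&& c == c'.+1, j == rport c' & i == 0]].

Lemma gadjE m x y : gadj m x y = padj m (copy_of m x) (local m x) (copy_of m y) (local m y).
Proof. by []. Qed.

Definition hl (b : bool) (i : nat) : seq nat :=
  if b then nth [::] [:: [:: 1;6]; [::0;2;4]; [::1;3;5]; [::2;4;6]; [::3;5;1]; [::4;6;2]; [::5;0;3]] i
  else nth [::] [::[::1;5];[::0;2;4];[::1;3;5];[::2;4];[::3;5;1];[::4;0;2]] i.

Lemma hadj_hl b i j : hadj b i j = (j \in hl b i).
Proof.
case: b; case: i => [|[|[|[|[|[|[|i]]]]]]]; case: j => [|[|[|[|[|[|[|j]]]]]]]; rewrite /hadj /hl /h3adj /h2adj /= ?nth_nil ?in_nil ?andbF //.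
Qed.

Definition ext m c i : seq (nat * nat) :=
  if i == 0 then (if c == 0 then [:: (1,0)] else [:: (c.-1, rport c.-1)])
  else if (i == 3) && ~~ is_H3 m c then [:: (c.+1, 0)] else [::].

Definition nbrs m c i := [seq (c, j) | j <- hl (is_H3 m c) i] ++ ext m c i.

Lemma ext_fst m c i p : p \in ext m c i -> p.1 != c.
Proof.
rewrite /ext; case: ifP => _; [case: ifP => [/eqP->|c0]|case: ifP => _];
  rewrite ?inE // => /eqP-> /=; lia.
Qed.

Lemma padj_nbrs m c i c' j : 2 <= m -> c < m -> c' < m ->
  padj m c i c' j = ((c', j) \in nbrs m c i).
Proof.
move=> hm hc hc'; rewrite /padj /nbrs mem_cat.
have [->|ne] := eqVneq c' c.
  have -> : (c, j) \in ext m c i = false by apply/negP => /ext_fst /=; rewrite eqxx.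
  rewrite (mem_map (fun a b (h : (c, a) = (c, b)) => congr1 snd h)) -hadj_hl.
  have -> : (c == c.+1) = false by lia.
  by rewrite /= !orbF.
have -> : (c', j) \in [seq (c, j) | j <- hl (is_H3 m c) i] = false.
  by apply/negP => /mapP [k _] [] /eqP; rewrite (negbTE ne).
rewrite /=.
rewrite /ext /rport.
case: (eqVneq i 0) => [->|i0] /=.
  case: (eqVneq c 0) => [->|c0] /=; rewrite ?inE /=.
    case: (eqVneq c' 1) => [->|c1] /=; first by rewrite orbF xpair_eqE.
    by rewrite xpair_eqE (negbTE c1).
  rewrite andbF /= xpair_eqE andbT.
  have -> : (c == c'.+1) = (c' == c.-1) by lia.
  by case: (eqVneq c' c.-1) => [->|].
rewrite !andbF !orbF.
case: (eqVneq c 0) => [->|c0] /=.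
  by rewrite (negbTE i0) /is_H3 /= ?andbF in_nil.
case: (eqVneq i 3) => [_|i3] /=; last by rewrite andbF in_nil.
rewrite /is_H3 (negbTE c0) /=.
case: (eqVneq c (m-1)) => [->|cm] /=.
  by rewrite in_nil; apply/negbTE; lia.
by rewrite inE xpair_eqE.
Qed.

Definition valid m (p : nat * nat) := (p.1 < m) && (p.2 < sz m p.1).

Lemma hl_bound b i j : i < (if b then 7 else 6) -> j \in hl b i -> j < (if b then 7 else 6).
Proof.
by case: b; case: i => [|[|[|[|[|[|[|i]]]]]]] //=; rewrite !inE => _ h;
  repeat (case/orP: h => [/eqP -> // | h]); move/eqP: h => ->.
Qed.

Lemma nbrs_valid m p q : 2 <= m -> valid m p -> q \in nbrs m p.1 p.2 -> valid m q.
Proof.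
case: p => c i hm /andP [/= hc hi]; rewrite /nbrs mem_cat => /orP [/mapP [j hj ->]|].
  by rewrite /valid /= hc; move: hi hj; rewrite /sz; apply: hl_bound.
rewrite /ext /valid /sz /is_H3 /rport.
case: (eqVneq i 0) => [_|i0].
  case: (eqVneq c 0) => [_|c0]; rewrite inE => /eqP -> /=.
    by rewrite hm; case: ifP.
  have -> : c.-1 < m by lia.
  by case: (c.-1 == 0); case: (c.-1 == m-1).
case: (eqVneq i 3) => [_|i3]; last by [].
case: (eqVneq c 0) => [_|c0] //.
case: (eqVneq c (m-1)) => [_|cm] //.
rewrite /= inE => /eqP -> /=.
have -> : c.+1 < m by lia.
by case: ifP.
Qed.

Definition enc m (p : nat * nat) : 'I_(6 * m + 2) :=
  cast_ord (esym (addn2 (6 * m))) (inord (base p.1 + p.2)).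
Definition dec m (x : nat) := (copy_of m x, local m x).

Lemma valid_bound m p : 2 <= m -> valid m p -> base p.1 + p.2 < 6 * m + 2.
Proof.
case: p => c i hm /andP [/= hc]; rewrite /sz /is_H3 /base.
case: (eqVneq c 0) => [->|c0] /=; first by lia.
case: (eqVneq c (m-1)) => [->|cm] /=; lia.
Qed.

Lemma val_enc m p : 2 <= m -> valid m p -> val (enc m p) = base p.1 + p.2.
Proof.
move=> hm hv; rewrite /enc /= inordK //.
by have := valid_bound hm hv; rewrite addn2.
Qed.

Lemma dec_enc m p : 2 <= m -> valid m p -> dec m (enc m p) = p.
Proof.
move=> hm hv; rewrite /dec val_enc //; case: p hv => c i /andP [/= hc hi].
by have [-> ->] := enc_ok hm hc hi.
Qed.

Lemma dec_valid m (x : 'I_(6 * m + 2)) : 2 <= m -> valid m (dec m x).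
Proof. by move=> hm; have [h1 h2 _] := dec_ok hm (ltn_ord x); rewrite /valid /= h1 h2. Qed.

Lemma enc_dec m (x : 'I_(6 * m + 2)) : 2 <= m -> enc m (dec m x) = x.
Proof.
move=> hm; apply: val_inj; rewrite val_enc ?dec_valid //=.
by have [_ _ <-] := dec_ok hm (ltn_ord x).
Qed.

Lemma enc_inj m p q : 2 <= m -> valid m p -> valid m q -> enc m p = enc m q -> p = q.
Proof. by move=> hm hp hq e; rewrite -(dec_enc hm hp) -(dec_enc hm hq) e. Qed.

Lemma GmE m (x y : 'I_(6 * m + 2)) : 2 <= m ->
  Gm m x y = (dec m y \in nbrs m (dec m x).1 (dec m x).2).
Proof.
move=> hm; rewrite /Gm gadjE padj_nbrs //.
- by case/andP: (dec_valid x hm).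
- by case/andP: (dec_valid y hm).
Qed.

Lemma GmE' m p q : 2 <= m -> valid m p -> valid m q ->
  Gm m (enc m p) (enc m q) = padj m p.1 p.2 q.1 q.2.
Proof.
move=> hm hp hq; rewrite /Gm gadjE.
have := dec_enc hm hp; have := dec_enc hm hq; rewrite /dec.
by case: p hp => a b _; case: q hq => c d _ [-> ->] [-> ->].
Qed.

Lemma NsetE m (x : 'I_(6 * m + 2)) : 2 <= m ->
  [set y | Gm m x y] = [set y in map (enc m) (nbrs m (dec m x).1 (dec m x).2)].
Proof.
move=> hm; apply/setP => y; rewrite !inE GmE //; apply/idP/idP.
  by move=> h; rewrite -(enc_dec y hm); apply: map_f.
case/mapP => p hp ->; rewrite dec_enc //.
by apply: (nbrs_valid hm (dec_valid x hm)).
Qed.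

Lemma nbrs_us m p : 2 <= m -> valid m p ->
  uniq (nbrs m p.1 p.2) /\ size (nbrs m p.1 p.2) = 3.
Proof.
move=> hm; case: p => c i /andP [/= hc]; rewrite /sz /nbrs /ext.
case hb: (is_H3 m c) => hi;
  case: i hi => [|[|[|[|[|[|[|i]]]]]]] //= _; rewrite ?hb /= ?inE ?xpair_eqE ?eqxx //=.
all: case: (eqVneq c 0) => [->|c0] //=; rewrite ?inE ?xpair_eqE ?eqxx /=.
all: try (have -> : (c == c.-1) = false by lia).
all: try (have -> : (c == c.+1) = false by lia).
all: by [].
Qed.

Lemma map_enc_uniq m s : 2 <= m -> all (valid m) s -> uniq s -> uniq (map (enc m) s).
Proof.
move=> hm /allP hv us; rewrite map_inj_in_uniq // => p q hp hq.
by apply: enc_inj => //; apply: hv.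
Qed.

Lemma nbrs_allvalid m (x : 'I_(6 * m + 2)) : 2 <= m ->
  all (valid m) (nbrs m (dec m x).1 (dec m x).2).
Proof. by move=> hm; apply/allP => q; apply: nbrs_valid => //; apply: dec_valid. Qed.

Lemma cubicGm m : 2 <= m -> cubic (Gm m).
Proof.
move=> hm x; rewrite /deg NsetE // cardsE.
have [u s] := nbrs_us hm (dec_valid x hm).
move/card_uniqP: (map_enc_uniq hm (nbrs_allvalid x hm) u) => ->.
by rewrite size_map.
Qed.

Lemma hadj_lt b i j : hadj b i j -> (i < 7) && (j < 7).
Proof. rewrite /hadj /h3adj /h2adj; case: b => /and3P [hi hj _]; apply/andP; split; lia. Qed.

Lemma hadj_sym b i j : hadj b i j = hadj b j i.
Proof.
have us a c k l : upair a c k l = upair c a k l by rewrite /upair orbC; congr orb; apply: andbC.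
rewrite /hadj /h3adj /h2adj; case: b; rewrite andbCA orbCA;
  rewrite ?(us i j 1 4) ?(us i j 2 5) ?(us i j 3 6) //.
Qed.

Lemma hadj_irr b i : hadj b i i = false.
Proof. by rewrite hadj_hl; case: b; case: i => [|[|[|[|[|[|[|i]]]]]]] //=; rewrite nth_nil. Qed.

Lemma hadj_tri_fin b : all (fun i => all (fun j => all (fun k =>
  ~~ [&& hadj b i j, hadj b j k & hadj b k i]) (iota 0 7)) (iota 0 7)) (iota 0 7).
Proof. by case: b; vm_compute. Qed.

Lemma iota7 i : i < 7 -> i \in iota 0 7.
Proof. by rewrite mem_iota. Qed.

Lemma hadj_tri b i j k : hadj b i j -> hadj b j k -> hadj b k i -> False.
Proof.
move=> h1 h2 h3.
case/andP: (hadj_lt h1) => hi hj; case/andP: (hadj_lt h2) => _ hk.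
move/allP/(_ i (iota7 hi))/allP/(_ j (iota7 hj))/allP/(_ k (iota7 hk)): (hadj_tri_fin b).
by rewrite h1 h2 h3.
Qed.

Lemma padj_sym m c i c' j : padj m c i c' j = padj m c' j c i.
Proof.
rewrite /padj; have [->|ne] := eqVneq c c'.
  by rewrite hadj_sym /=; congr orb; rewrite orbC.
by rewrite /= orbC.
Qed.

Lemma padj_irr m c i : padj m c i c i = false.
Proof.
rewrite /padj eqxx hadj_irr /=.
by have -> : (c == c.+1) = false by lia.
Qed.

Lemma padj_tri m c1 i1 c2 i2 c3 i3 :
  padj m c1 i1 c2 i2 -> padj m c2 i2 c3 i3 -> padj m c3 i3 c1 i1 -> False.
Proof.
rewrite /padj.
move=> /or3P [/andP[/eqP ? h1]|/and3P[/eqP ? /eqP ? /eqP ?]|/and3P[/eqP ? /eqP ? /eqP ?]];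
move=> /or3P [/andP[/eqP ? h2]|/and3P[/eqP ? /eqP ? /eqP ?]|/and3P[/eqP ? /eqP ? /eqP ?]];
move=> /or3P [/andP[/eqP ? h3]|/and3P[/eqP ? /eqP ? /eqP ?]|/and3P[/eqP ? /eqP ? /eqP ?]];
subst; try lia.
  exact: hadj_tri h1 h2 h3.
all: match goal with h : is_true (hadj _ ?a ?a) |- _ => by rewrite hadj_irr in h end.
Qed.

Lemma simpleGm m : 2 <= m -> simple_graph (Gm m).
Proof.
move=> hm; split.
  by move=> x y; rewrite /Gm !gadjE padj_sym.
by move=> x; rewrite /Gm gadjE padj_irr.
Qed.

Lemma trifreeGm m : 2 <= m -> triangle_free (Gm m).
Proof. by move=> hm x y z; rewrite /Gm !gadjE; apply: padj_tri. Qed.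

Lemma fwd_closed (V : finType) (e : rel V) (a : {pred V}) x y :
  (forall u v, e u v -> u \in a -> v \in a) -> connect e x y -> x \in a -> y \in a.
Proof.
move=> cl /connectP [p e_p ->]; elim: p x e_p => //= z p IHp x /andP [exz pz] ax.
exact: IHp pz (cl _ _ exz ax).
Qed.

Lemma bridge_gen (V : finType) (e : rel V) x y :
  symmetric e -> e x y -> ~~ connect (del_edge e x y) x y ->
  n_comp e [set: V] < n_comp (del_edge e x y) [set: V].
Proof.
move=> se exy ncon.
set e' := del_edge e x y.
have se' : symmetric e'.
  move=> a b; rewrite /e' /del_edge se; congr andb; congr negb.
  by case: (a == x); case: (b == y); case: (a == y); case: (b == x).
have cs := sym_connect_sym se; have cs' := sym_connect_sym se'.
have sub : forall a b, connect e' a b -> connect e a b.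
  apply: connect_sub => a b; rewrite /e' /del_edge => /andP [h _].
  exact: connect1.
set R := [set r | fingraph.roots e' r].
have -> : n_comp e [set: V] = #|[set r | fingraph.roots e r]|.
  by apply: eq_card => r; rewrite !inE andbT.
have -> : n_comp e' [set: V] = #|R|.
  by apply: eq_card => r; rewrite !inE andbT.
have h1 : [set r | fingraph.roots e r] \subset fingraph.root e @: R.
  apply/subsetP => r; rewrite inE => /eqP rr.
  apply/imsetP; exists (fingraph.root e' r); first by rewrite inE roots_root.
  rewrite -{1}rr; apply/(fingraph.rootP cs); apply: sub.
  exact: connect_root.
apply: (leq_ltn_trans (subset_leq_card h1)).
rewrite ltn_neqAle leq_imset_card andbT.
apply/negP => /imset_injP inj.
have hx : fingraph.root e' x \in R by rewrite inE roots_root.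
have hy : fingraph.root e' y \in R by rewrite inE roots_root.
have : fingraph.root e (fingraph.root e' x) = fingraph.root e (fingraph.root e' y).
  have -> : fingraph.root e (fingraph.root e' x) = fingraph.root e x.
    by apply/esym/(fingraph.rootP cs)/sub/connect_root.
  have -> : fingraph.root e (fingraph.root e' y) = fingraph.root e y.
    by apply/esym/(fingraph.rootP cs)/sub/connect_root.
  by apply/(fingraph.rootP cs)/connect1.
move/(inj _ _ hx hy)/(fingraph.rootP cs').
by move/negP: ncon.
Qed.

Lemma val_enc' m p : 2 <= m -> valid m p -> nat_of_ord (enc m p) = base p.1 + p.2.
Proof. exact: val_enc. Qed.

Lemma bridgedGm m : 2 <= m -> bridged (Gm m).
Proof.
move=> hm.
have v0 : valid m (0, 0) by rewrite /valid /= /sz /is_H3 /=; lia.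
have v1 : valid m (1, 0) by rewrite /valid /= /sz; case: ifP; lia.
exists (enc m (0,0)), (enc m (1,0)); split.
  by rewrite GmE' //.
apply: bridge_gen.
- by case: (simpleGm hm).
- by rewrite GmE' //.
apply/negP => /fwd_closed h.
have : val (enc m (1, 0)) < 7.
  apply: (h [pred u : 'I_(6 * m + 2) | val u < 7]); last by rewrite inE (val_enc hm v0).
  move=> u v; rewrite /del_edge => /andP [euv nd]; rewrite inE => hu; rewrite inE.
  have du : dec m u = (0, val u) by rewrite /dec /copy_of /local hu.
  move: euv; rewrite GmE // du /nbrs mem_cat => /orP [/mapP [j _ ev] | ].
    have [_ hl hv] := dec_ok hm (ltn_ord v).
    move: ev; rewrite /dec => [[c0 _]].
    by rewrite /=; move: hl hv; rewrite c0 /sz /is_H3 /base /= => hl ->.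
  rewrite /ext /is_H3 /=; case: eqP => [u0|_]; last by rewrite andbF.
  rewrite inE => /eqP ev.
  have : enc m (dec m v) = enc m (1,0) by rewrite ev.
  rewrite enc_dec // => ve.
  have ue : u = enc m (0, 0) by apply: val_inj; rewrite (val_enc hm v0) /= u0.
  by move: nd; rewrite ue ve !eqxx.
by rewrite (val_enc hm v1).
Qed.

Definition E8 : seq (nat * nat) :=
  [:: (0,1); (0,6); (0,7); (1,2); (1,4); (2,3); (2,5); (3,4); (3,6); (4,5); (5,6)].
Definition eidx i j := find (fun e : nat * nat => upair i j e.1 e.2) E8.
Definition gg (cs : seq nat) i j := nth 0 cs (eidx i j).
Definition N8 v := nth [::] [:: [::1;6;7]; [::0;2;4]; [::1;3;5]; [::2;4;6]; [::3;5;1]; [::4;6;2]; [::5;0;3]] v.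
Definition chk (cs : seq nat) := all (fun v => uniq [seq gg cs v u | u <- N8 v]) (iota 0 7).
Definition chk' (cs : seq nat) := all (fun t => uniq [seq nth 0 cs k | k <- t])
  [:: [::0;1;2]; [::0;3;4]; [::3;5;6]; [::5;7;8]; [::7;9;4]; [::9;10;6]; [::10;1;8]].
Fixpoint allseqs n : seq (seq nat) :=
  if n is n'.+1 then flatten [seq [seq x :: s | s <- allseqs n'] | x <- iota 0 3] else [:: [::]].

Lemma chkE cs : chk cs = chk' cs.
Proof. by []. Qed.

Lemma nochk : ~~ has chk' (allseqs 11).
Proof. vm_compute. reflexivity. Qed.

Lemma mem_allseqs n s : size s = n -> all (fun x => x < 3) s -> s \in allseqs n.
Proof.
elim: n s => [|n IH] [|x s] //= [hs] /andP [hx ha].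
have hs' := IH s hs ha.
by case: x hx => [|[|[|x]]] // _; rewrite !mem_cat ?(map_f (cons _) hs') ?orbT.
Qed.

Definition N8' i := if i == 7 then [:: 0] else N8 i.

Lemma no3col (g : nat -> nat -> nat) :
  (forall i j, i < 8 -> j < 8 -> j \in N8' i -> g i j = g j i /\ g i j < 3) ->
  (forall i j k, i < 7 -> j < 8 -> k < 8 -> j \in N8' i -> k \in N8' i -> j != k ->
     g i j != g i k) -> False.
Proof.
move=> H1 H2.
set cs := [seq g e.1 e.2 | e <- E8].
have hin : cs \in allseqs 11.
  apply: mem_allseqs => //; rewrite all_map /=.
  repeat (apply/andP; split); try done.
  all: try match goal with |- is_true (leq (S (?f ?a ?b)) _) => exact: (proj2 (H1 a b isT isT isT)) end.
have hc : chk cs.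
  apply/allP => v; rewrite mem_iota /= => hv.
  have e : {in N8 v, gg cs v =1 g v}.
    case: v hv => [|[|[|[|[|[|[|v]]]]]]] //= _ u; rewrite !inE => /or3P [] /eqP ->;
      rewrite /gg /=; try done;
      match goal with |- _ ?a ?b = _ ?b ?a => exact: (proj1 (H1 a b isT isT isT)) end.
  have -> : [seq gg cs v u | u <- N8 v] = [seq g v u | u <- N8 v] by apply/eq_in_map.
  rewrite add0n in hv.
  have hv8 : v < 8 by apply: ltnW.
  have hN : forall u, u \in N8 v -> u < 8.
    by case: v hv {e hv8} => [|[|[|[|[|[|[|v]]]]]]] //= _ u; rewrite !inE => /or3P [] /eqP ->.
  have hN' : forall u, u \in N8 v -> u \in N8' v.
    by rewrite /N8'; have -> : (v == 7) = false by case: v hv {e hv8 hN} => [|[|[|[|[|[|[|v]]]]]]].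
  rewrite map_inj_in_uniq.
    by case: v hv {e hv8 hN hN'} => [|[|[|[|[|[|[|v]]]]]]].
  move=> j k hj hk gjk; apply/eqP; apply/negPn/negP => ne.
  by move: (H2 v j k hv (hN _ hj) (hN _ hk) (hN' _ hj) (hN' _ hk) ne); rewrite gjk eqxx.
by move/negP: nochk; apply; apply/hasP; exists cs; rewrite -?chkE.
Qed.

Definition T3t : seq (seq nat) := [:: [:: 0; 0; 0; 0; 0; 0; 1]; [:: 0; 0; 1; 0; 2; 0; 0];
  [:: 0; 1; 0; 0; 0; 2; 0]; [:: 0; 0; 0; 0; 1; 0; 2]; [:: 0; 2; 0; 1; 0; 0; 0];
  [:: 0; 0; 2; 0; 0; 0; 3]; [:: 1; 0; 0; 2; 0; 3; 0]].
Definition T2t : seq (seq nat) := [:: [:: 0; 0; 0; 0; 0; 1; 0]; [:: 0; 0; 1; 0; 2; 0; 0];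
  [:: 0; 1; 0; 0; 0; 2; 0]; [:: 0; 0; 0; 0; 1; 0; 0]; [:: 0; 2; 0; 1; 0; 0; 0];
  [:: 1; 0; 2; 0; 0; 0; 0]; [:: 0; 0; 0; 0; 0; 0; 0]].
Definition tabl (b : bool) i j := nth 0 (nth [::] (if b then T3t else T2t) i) j.

Lemma tab_sym b i j : tabl b i j = tabl b j i.
Proof.
by rewrite /tabl; case: b; case: i => [|[|[|[|[|[|[|i]]]]]]];
  case: j => [|[|[|[|[|[|[|j]]]]]]]; rewrite /= ?nth_nil.
Qed.

Lemma tab_lt b i j : tabl b i j < 4.
Proof.
by rewrite /tabl; case: b; case: i => [|[|[|[|[|[|[|i]]]]]]];
  case: j => [|[|[|[|[|[|[|j]]]]]]]; rewrite /= ?nth_nil.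
Qed.

Definition port (b : bool) i := (i == 0) || (~~ b && (i == 3)).

Lemma tab_fin b : all (fun i =>
   all (fun j => all (fun k => (j != k) ==> (tabl b i j != tabl b i k)) (hl b i)) (hl b i)
   && (port b i ==> all (fun j => tabl b i j != 3) (hl b i)))
  (iota 0 (if b then 7 else 6)).
Proof. by case: b. Qed.

Lemma ext_port m c i r : r \in ext m c i -> port (is_H3 m c) i.
Proof.
rewrite /ext /port; case: (eqVneq i 0) => //= _.
by case: ifP => //; rewrite andbC.
Qed.

Lemma ext_le1 m c i q r : q \in ext m c i -> r \in ext m c i -> q = r.
Proof.
rewrite /ext; case: ifP => _; [case: ifP => _|case: ifP => _];
  by rewrite ?inE // => /eqP -> /eqP ->.
Qed.

Definition pcol m (p q : nat * nat) := if p.1 == q.1 then tabl (is_H3 m p.1) p.2 q.2 else 3.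

Lemma pcol_proper m p q r : 2 <= m -> valid m p ->
  q \in nbrs m p.1 p.2 -> r \in nbrs m p.1 p.2 -> q != r -> pcol m p q != pcol m p r.
Proof.
case: p => c i hm /andP [/= hc hi].
have /allP /(_ i) := tab_fin (is_H3 m c).
rewrite mem_iota add0n; move: hi; rewrite /sz => hi /(_ hi) /andP [/allP h1 /implyP h2].
rewrite /nbrs !mem_cat /pcol /=.
move=> /orP [/mapP [j hj ->] | hq] /orP [/mapP [k hk ->] | hr] ne /=.
- rewrite eqxx; have := h1 j hj => /allP /(_ k hk) /implyP; apply.
  by apply: contra ne => /eqP ->.
- have := ext_fst hr; rewrite eq_sym => /negbTE ->; rewrite eqxx.
  by have := h2 (ext_port hr) => /allP /(_ j hj).
- have := ext_fst hq; rewrite eq_sym => /negbTE ->; rewrite eqxx.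
  by have := h2 (ext_port hq) => /allP /(_ k hk); rewrite eq_sym.
- by move: ne; rewrite (ext_le1 hq hr) eqxx.
Qed.

Definition colm m (x y : 'I_(6 * m + 2)) := pcol m (dec m x) (dec m y).

Lemma colm_ok m : 2 <= m -> edge_colouring (Gm m) 4 (@colm m).
Proof.
move=> hm; split.
  move=> x y _; rewrite /colm /pcol; split; last by case: ifP => // _; apply: tab_lt.
  by rewrite eq_sym; case: ifP => // /eqP ->; rewrite tab_sym.
move=> x y z; rewrite !GmE // => hy hz ne; apply: pcol_proper => //.
  exact: dec_valid.
by apply: contra ne => /eqP e; rewrite -(enc_dec y hm) -(enc_dec z hm) e.
Qed.

Lemma maxdegGm m : 2 <= m -> max_deg (Gm m) = 3.
Proof.
move=> hm; rewrite /max_deg; apply/eqP; rewrite eqn_leq; apply/andP; split.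
  by apply/bigmax_leqP => x _; rewrite (cubicGm hm).
have x0 : 'I_(6 * m + 2) by apply: (@Ordinal _ 0); rewrite addn2.
by rewrite -{1}(cubicGm hm x0); apply: leq_bigmax.
Qed.

Definition pr8 i := if i == 7 then (1, 0) else (0, i).
Definition A8 m i := enc m (pr8 i).

Lemma pr8_valid m i : 2 <= m -> i < 8 -> valid m (pr8 i).
Proof.
move=> hm hi; rewrite /pr8 /valid /sz /is_H3; case: ifP => h7 /=.
  by case: ifP => _; lia.
move/negbT: h7 => h7; apply/andP; split; lia.
Qed.

Lemma A8_adj m i k : 2 <= m -> i < 8 -> k < 8 -> k \in N8' i -> Gm m (A8 m i) (A8 m k).
Proof.
move=> hm hi hk; rewrite /A8 GmE' ?pr8_valid //.
case: i hi => [|[|[|[|[|[|[|[|i]]]]]]]] //= _; rewrite /N8' /N8 /= !inE => h;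
  repeat (case/orP: h => [/eqP -> // | h]); move/eqP: h => -> //.
Qed.

Lemma A8_inj m i k : 2 <= m -> i < 8 -> k < 8 -> i != k -> A8 m i != A8 m k.
Proof.
move=> hm hi hk ne; apply/negP => /eqP /(enc_inj hm (pr8_valid hm hi) (pr8_valid hm hk)).
rewrite /pr8; case: (eqVneq i 7) => [ei|ni]; case: (eqVneq k 7) => [ek|nk].
all: first [by rewrite ei ek eqxx in ne | by case | by case => e; rewrite e eqxx in ne].
Qed.

Lemma class2Gm m : 2 <= m -> class2 (Gm m).
Proof.
move=> hm; rewrite /class2 maxdegGm //; split.
  by exists (@colm m); apply: colm_ok.
move=> j [col [H1 H2]]; rewrite leqNgt; apply/negP => hj.
apply: (@no3col (fun i k => col (A8 m i) (A8 m k))).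
  move=> i k hi hk hn; have [s l] := H1 _ _ (A8_adj hm hi hk hn); split => //; lia.
move=> i k l hi hk hl hnk hnl ne; apply: H2.
- by apply: A8_adj => //; apply: ltnW.
- by apply: A8_adj => //; apply: ltnW.
by apply: A8_inj.
Qed.

Section Gen.
Variables (V : finType) (e : rel V).

Lemma step_sub (S : {set V}) x : x \in S -> x \in conv_step e S.
Proof. by rewrite /conv_step inE => ->. Qed.

Lemma iter_mono (S : {set V}) t x : x \in conv_iter e S t -> x \in conv_iter e S t.+1.
Proof. by rewrite /conv_iter iterS; apply: step_sub. Qed.

Lemma step_two (S : {set V}) x y z :
  e x y -> e x z -> y != z -> y \in S -> z \in S -> x \in conv_step e S.
Proof.
move=> exy exz ne yS zS; rewrite /conv_step !inE; apply/orP; right.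
have <- : #|[set y; z]| = 2 by rewrite cards2 ne.
apply: subset_leq_card; apply/subsetP => u; rewrite !inE => /orP [] /eqP ->;
  by rewrite ?yS ?zS.
Qed.

Lemma iter_two (S : {set V}) t x y z :
  e x y -> e x z -> y != z -> y \in conv_iter e S t -> z \in conv_iter e S t ->
  x \in conv_iter e S t.+1.
Proof. by rewrite /conv_iter iterS; apply: step_two. Qed.

Lemma noconv (S C : {set V}) :
  (forall x, x \in C -> x \notin S) ->
  (forall x, x \in C -> #|[set u | e x u] :\: C| <= 1) ->
  forall t x, x \in C -> x \notin conv_iter e S t.
Proof.
move=> hS hC; elim=> [|t IH] x xC; first exact: hS.
rewrite /conv_iter iterS -/(conv_iter e S t) /conv_step !inE negb_or IH //=.
rewrite -ltnNge ltnS; apply: leq_trans (hC x xC); apply: subset_leq_card.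
apply/subsetP => u; rewrite !inE => /andP [uT exu]; rewrite exu andbT.
by apply: contraL (IH u) uT.
Qed.

End Gen.

Definition sl (b : bool) := if b then [:: 2; 4] else [:: 1; 5].
Definition S0 m := [set x : 'I_(6 * m + 2) | local m x \in sl (is_H3 m (copy_of m x))].

Lemma copy_conv m c i : 2 <= m -> c < m -> i < sz m c ->
  enc m (c, i) \in conv_iter (Gm m) (S0 m) 3.
Proof.
move=> hm hc.
have V j : j < sz m c -> valid m (c, j) by move=> hj; rewrite /valid /= hc hj.
have E j k : j < sz m c -> k < sz m c ->
    Gm m (enc m (c, j)) (enc m (c, k)) = hadj (is_H3 m c) j k.
  move=> hj hk; rewrite GmE' ?V // /padj /= eqxx /=.
  have -> : (c == c.+1) = false by lia.
  by rewrite orbF.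
have D j k : j < sz m c -> k < sz m c -> j != k -> enc m (c, j) != enc m (c, k).
  by move=> hj hk ne; apply: contra ne => /eqP /(enc_inj hm (V _ hj) (V _ hk)) [->].
have B j : j < sz m c -> j \in sl (is_H3 m c) -> enc m (c, j) \in conv_iter (Gm m) (S0 m) 0.
  move=> hj hs; rewrite /conv_iter /= /S0 inE.
  by have := dec_enc hm (V _ hj); rewrite /dec => [[-> ->]].
have T t a j k : a < sz m c -> j < sz m c -> k < sz m c ->
    hadj (is_H3 m c) a j -> hadj (is_H3 m c) a k -> j != k ->
    enc m (c, j) \in conv_iter (Gm m) (S0 m) t -> enc m (c, k) \in conv_iter (Gm m) (S0 m) t ->
    enc m (c, a) \in conv_iter (Gm m) (S0 m) t.+1.
  move=> ha hj hk h1 h2 ne; apply: iter_two; rewrite ?E //; exact: D.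
have M := @iter_mono _ (Gm m) (S0 m).
move: T B; rewrite /sz; case: (is_H3 m c) => T B hi.
  have p02 := B 2 isT isT; have p04 := B 4 isT isT.
  have p11 := T 0 1 2 4 isT isT isT isT isT isT p02 p04.
  have p13 := T 0 3 2 4 isT isT isT isT isT isT p02 p04.
  have p15 := T 0 5 2 4 isT isT isT isT isT isT p02 p04.
  have p26 := T 1 6 5 3 isT isT isT isT isT isT p15 p13.
  have p21 := M _ _ p11.
  have p30 := T 2 0 1 6 isT isT isT isT isT isT p21 p26.
  case: i hi => [|[|[|[|[|[|[|i]]]]]]] // _.
  - exact: M _ _ (M _ _ p11).
  - exact: M _ _ (M _ _ (M _ _ p02)).
  - exact: M _ _ (M _ _ p13).
  - exact: M _ _ (M _ _ (M _ _ p04)).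
  - exact: M _ _ (M _ _ p15).
  - exact: M _ _ p26.
have p01 := B 1 isT isT; have p05 := B 5 isT isT.
have p10 := T 0 0 1 5 isT isT isT isT isT isT p01 p05.
have p12 := T 0 2 1 5 isT isT isT isT isT isT p01 p05.
have p14 := T 0 4 1 5 isT isT isT isT isT isT p01 p05.
have p23 := T 1 3 2 4 isT isT isT isT isT isT p12 p14.
case: i hi => [|[|[|[|[|[|i]]]]]] // _.
- exact: M _ _ (M _ _ p10).
- exact: M _ _ (M _ _ (M _ _ p01)).
- exact: M _ _ (M _ _ p12).
- exact: M _ _ p23.
- exact: M _ _ (M _ _ p14).
- exact: M _ _ (M _ _ (M _ _ p05)).
Qed.


Lemma S0_conv m : 2 <= m -> conv_iter (Gm m) (S0 m) 3 = [set: 'I_(6 * m + 2)].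
Proof.
move=> hm; apply/setP => x; rewrite in_setT -(enc_dec x hm).
move: (dec_valid x hm); case: (dec m x) => c i /andP [hc hi].
exact: copy_conv.
Qed.

Lemma card_part m (A : {set 'I_(6 * m + 2)}) : 2 <= m ->
  #|A| = \sum_(c < m) #|[set x in A | copy_of m x == c]|.
Proof.
case: m A => // n A hn.
rewrite -sum1_card (partition_big (fun x : 'I_(6 * n.+1 + 2) => (inord (copy_of n.+1 x) : 'I_n.+1)) xpredT) //=.
apply: eq_bigr => c _; rewrite -sum1_card; apply: eq_bigl => x; rewrite !inE; congr andb.
have [h1 _ _] := dec_ok hn (ltn_ord x).
by rewrite -val_eqE /= inordK.
Qed.

Lemma enc_eq m p q : 2 <= m -> valid m p -> valid m q -> (enc m p == enc m q) = (p == q).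
Proof.
move=> hm hp hq; apply/eqP/eqP => [|-> //]; exact: enc_inj.
Qed.

Lemma S0_copy m c : 2 <= m -> c < m -> #|[set x in S0 m | copy_of m x == c]| = 2.
Proof.
move=> hm hc.
have hs : forall a, a \in sl (is_H3 m c) -> valid m (c, a).
  by move=> a; rewrite /valid /= hc /sz; case: (is_H3 m c); rewrite !inE => /orP [] /eqP ->.
have [a [b [eab ha hb hab]]] : exists a b, [/\ sl (is_H3 m c) = [:: a; b],
    a \in sl (is_H3 m c), b \in sl (is_H3 m c) & a != b].
  by case: (is_H3 m c); [exists 2, 4 | exists 1, 5]; split.
have -> : [set x in S0 m | copy_of m x == c] = [set enc m (c, a); enc m (c, b)].
  apply/setP => x; rewrite !inE.
  case: (eqVneq (copy_of m x) c) => [e|ne].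
    have xe : x = enc m (c, local m x) by rewrite -e; exact: (esym (enc_dec x hm)).
    have vx : valid m (c, local m x) by rewrite -e; exact: (dec_valid x hm).
    rewrite andbT e eab !inE.
    transitivity ((enc m (c, local m x) == enc m (c, a)) || (enc m (c, local m x) == enc m (c, b)));
      last by rewrite -xe.
    rewrite !enc_eq ?vx ?hs // ?inE; first by rewrite /eq_op /= eqxx.
  rewrite andbF; symmetry; apply/negbTE; rewrite negb_or.
  apply/andP; split; apply/negP => /eqP xe; move: ne; rewrite xe.
    by have := dec_enc hm (hs _ ha); rewrite /dec => [[-> _]]; rewrite eqxx.
  by have := dec_enc hm (hs _ hb); rewrite /dec => [[-> _]]; rewrite eqxx.
rewrite cards2 enc_eq ?hs // xpair_eqE eqxx /=.
by rewrite hab.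
Qed.

Lemma S0_card m : 2 <= m -> #|S0 m| = 2 * m.
Proof.
move=> hm; rewrite (card_part _ hm).
rewrite (eq_bigr (fun _ => 2)); last by move=> c _; apply: S0_copy.
by rewrite sum_nat_const card_ord mulnC.
Qed.

Definition cyc (b : bool) v :=
  if b then nth [:: 1;2;3;4] [:: [::1;2;3;4]; [::2;3;4;5]; [::3;4;5;6]; [::1;2;5;4];
                                [::2;3;6;5]; [::1;2;3;4]; [::1;2;3;4]] v
  else nth [:: 1;2;3;4] [:: [::1;2;3;4]; [::2;3;4;5]; [::0;1;4;5]; [::0;1;2;5];
                           [::0;1;2;5]; [::1;2;3;4]] v.

Lemma cyc_fin b : all (fun v => (v \notin cyc b v) && all (fun j =>
    (j < (if b then 7 else 6)) &&
    (count (fun k => k \notin cyc b v) (hl b j) + port b j <= 1)) (cyc b v))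
  (iota 0 (if b then 7 else 6)).
Proof. by case: b. Qed.

Lemma ext_size m c i : size (ext m c i) <= port (is_H3 m c) i.
Proof.
rewrite /ext /port; case: (eqVneq i 0) => //= _; first by case: ifP.
by case: ifP => // h; rewrite andbC h.
Qed.

Lemma copy_lb m (S : {set 'I_(6 * m + 2)}) c : 2 <= m -> c < m ->
  two_conversion_set (Gm m) S -> 2 <= #|[set x in S | copy_of m x == c]|.
Proof.
move=> hm hc [t ht]; rewrite leqNgt ltnS; apply/negP => /card_le1_eqP hB.
set B := [set x in S | copy_of m x == c] in hB.
set b := is_H3 m c.
set v := if [pick x in B] is Some x0 then local m x0 else 0.
have hBv : forall x, x \in B -> local m x = v.
  move=> x xB; rewrite /v; case: pickP => [x0 x0B|/(_ x)]; last by rewrite xB.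
  by rewrite (hB x x0 xB x0B).
have hv : v < sz m c.
  rewrite /v; case: pickP => [x0|_]; last by rewrite /sz; case: ifP.
  rewrite inE => /andP [_ /eqP <-].
  by have [_ h _] := dec_ok hm (ltn_ord x0).
have /allP /(_ v) := cyc_fin b.
rewrite mem_iota add0n -/(sz m c) => /(_ hv) /andP [vnc /allP hcyc].
set C := [set y : 'I_(6 * m + 2) | (copy_of m y == c) && (local m y \in cyc b v)].
have C1 : forall x, x \in C -> x \notin S.
  move=> x; rewrite inE => /andP [cx lx]; apply/negP => xS.
  have xB : x \in B by rewrite inE xS cx.
  by move: lx; rewrite (hBv x xB) (negbTE vnc).
have C2 : forall x, x \in C -> #|[set u | Gm m x u] :\: C| <= 1.
  move=> x; rewrite inE => /andP [/eqP cx jx].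
  have dx : dec m x = (c, local m x) by rewrite /dec cx.
  have vx : valid m (c, local m x) by rewrite -dx; apply: dec_valid.
  rewrite NsetE // dx /=.
  set L := nbrs m c (local m x).
  set P := fun q : nat * nat => ~~ ((q.1 == c) && (q.2 \in cyc b v)).
  apply: (@leq_trans (size (filter P L))).
    rewrite -(size_map (enc m)); apply: leq_trans (card_size _).
    apply: subset_leq_card; apply/subsetP => u; rewrite !inE => /andP [nC /mapP [q hq equ]].
    rewrite equ; apply: map_f; rewrite mem_filter hq andbT.
    have vq := nbrs_valid hm vx hq.
    move: nC; rewrite equ; have := dec_enc hm vq; rewrite /dec /P.
    by case: (q) => q1 q2 [-> ->].
  rewrite size_filter /L /nbrs count_cat count_map.
  case/andP: (hcyc _ jx) => _; apply: leq_trans; apply: leq_add.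
    by rewrite leq_eqVlt; apply/orP; left; apply/eqP; apply: eq_count => k; rewrite /P /preim /= eqxx.
  exact: leq_trans (count_size _ _) (ext_size _ _ _).
set j0 := nth 0 (cyc b v) 0.
have j0c : j0 \in cyc b v.
  apply: mem_nth; rewrite /cyc; case: (b); case: (v) => [|[|[|[|[|[|[|w]]]]]]]; by rewrite /= ?nth_nil.
have vj0 : valid m (c, j0).
  by rewrite /valid /= hc; case/andP: (hcyc j0 j0c); rewrite /sz.
have : enc m (c, j0) \in C.
  by rewrite inE; have := dec_enc hm vj0; rewrite /dec => [[-> ->]]; rewrite eqxx j0c.
move/(noconv C1 C2 t); rewrite ht.
by rewrite in_setT.
Qed.

Theorem proposition5p7 (m : nat) (hm : 2 <= m) :
  [/\ simple_graph (Gm m), cubic (Gm m), bridged (Gm m),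
      class2 (Gm m) & triangle_free (Gm m)] /\
  exists k : nat, is_c2 (Gm m) k /\
    ((k%:Z - (ceil_div (#|'I_(6 * m + 2)| + 2) 4)%:Z = (m %/ 2)%:Z - 1)%R).
Proof.
split.
  split; [exact: simpleGm | exact: cubicGm | exact: bridgedGm | exact: class2Gm | exact: trifreeGm].
exists (2 * m); split; last by rewrite card_ord; apply: int_eq.
split.
  by exists (S0 m); split; [exists 3; exact: S0_conv | exact: S0_card].
move=> S hS; rewrite (card_part S hm).
apply: (@leq_trans (\sum_(c < m) 2)); first by rewrite sum_nat_const card_ord mulnC.
by apply: leq_sum => c _; apply: copy_lb.
Qed.
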